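(* Let $f:\mathbb{R}^n\to\mathbb{R}$ be differentiable and pseudo-convex, with $\nabla f$ $L$-Lipschitz continuous, and assume the stationary set $X^*$ is non-empty. Let $\{x^k\},\{z^k\}$ be generated by Algorithm 2 (with $\nabla f(x^k)\ne0$ for all $k$). Then for every $x^*\in X^*$ and every $k$, $$\|x^{k+1}-x^*\|^2\le\|x^k-x^*\|^2-\kappa_2\|x^k-z^k\|^2,$$ where $\kappa_2=2\beta-1-\beta^2\nu^2>0$.
   Context: Pseudo-convex: $\nabla f$ pseudo-monotone, i.e. $\langle \nabla f(x),y-x\rangle\ge0\Rightarrow\langle\nabla f(y),y-x\rangle\ge0$ for all $x,y$. $X^*=\{x:\nabla f(x)=0\}$. Algorithm 2: parameters $0<\mu<\nu<1$, $0<\underline{h}<1\le\gamma_0^0\le\overline{h}$, $\theta\in(0,1)$, $\tau>1$, $\beta\in\left(\frac{1-\sqrt{1-\nu^2}}{\nu^2},1\right]$, starting point $x^0$. At iteration $k$: for $\gamma>0$ let $z^k(\gamma)=x^k-\gamma\nabla f(x^k)$ and $r_k(\gamma)=\gamma\|\nabla f(z^k(\gamma))-\nabla f(x^k)\|/\|z^k(\gamma)-x^k\|$; starting from $\gamma_0^k$, while $r_k(\gamma_l^k)>\nu$ set $\gamma_{l+1}^k=\gamma_l^k\theta\min\{1,1/r_k(\gamma_l^k)\}$; let $h_k$ be the first $\gamma_l^k$ with $r_k(\gamma_l^k)\le\nu$. Then $z^k=x^k-h_k\nabla f(x^k)$, $x^{k+1}=x^k-h_k\big(\nabla f(x^k)-\beta(\nabla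 f(x^k)-\nabla f(z^k))\big)$, and $\gamma_0^{k+1}=\mathbf{P}_{[\underline{h},\overline{h}]}(\tau h_k)$ if $r_k(h_k)\le\mu$, else $\gamma_0^{k+1}=\mathbf{P}_{[\underline{h},\overline{h}]}(h_k)$, where $\mathbf{P}_{[a,b]}$ is projection onto $[a,b]$. *)

(* Defs.v *)
From HB Require Import structures.
From mathcomp Require Import all_boot all_order all_algebra.
From mathcomp Require Import all_classical all_reals all_analysis.
Set Implicit Arguments. Unset Strict Implicit. Unset Printing Implicit Defensive.
Import Order.TTheory GRing.Theory Num.Theory.
Import numFieldNormedType.Exports.
Local Open Scope ring_scope.

Section Defs.
Variables (R : realType) (n : nat).
Notation vec := 'rV[R]_n.

Definition dotv (u v : vec) : R := \sum_(i < n) u 0 i * v 0 i.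
Definition enorm (u : vec) : R := Num.sqrt (dotv u u).

Definition is_gradient (f : vec -> R) (grad : vec -> vec) : Prop :=
  forall x, differentiable f x /\ forall v, 'd f x v = dotv (grad x) v.

Definition lipschitz_grad (grad : vec -> vec) (L : R) : Prop :=
  forall x y, enorm (grad x - grad y) <= L * enorm (x - y).

(* pseudo-convexity: the gradient is pseudo-monotone *)
Definition pseudo_monotone (grad : vec -> vec) : Prop :=
  forall x y, 0 <= dotv (grad x) (y - x) -> 0 <= dotv (grad y) (y - x).

Definition stationary_set (grad : vec -> vec) : set vec := [set x | grad x = 0].

Definition proj_int (a b t : R) : R := Num.max a (Num.min b t).

Definition zpt (grad : vec -> vec) (x : vec) (gam : R) : vec := x - gam *: grad x.

Definition ratio (grad : vec -> vec) (x : vec) (gam : R) : R :=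
  gam * enorm (grad (zpt grad x gam) - grad x) / enorm (zpt grad x gam - x).

Fixpoint ls_step (grad : vec -> vec) (theta : R) (x : vec) (gam0 : R) (l : nat) : R :=
  match l with
  | 0%N => gam0
  | l'.+1 => let g := ls_step grad theta x gam0 l' in
             g * theta * Num.min 1 (1 / ratio grad x g)
  end.

(* The sequences x, z, h (accepted steps h_k) and gam0 (initial trials gamma_0^k)
   are generated by Algorithm 2 from x0 with the given parameters. *)
Definition algorithm2 (grad : vec -> vec)
  (mu nu hlo hup theta tau beta : R) (x0 : vec)
  (x z : nat -> vec) (h gam0 : nat -> R) : Prop :=
  x 0%N = x0 /\
  forall k,
    (exists l, ratio grad (x k) (ls_step grad theta (x k) (gam0 k) l) <= nu /\
               (forall j, (j < l)%N ->
                   nu < ratio grad (x k) (ls_step grad theta (x k) (gam0 k) j)) /\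
               h k = ls_step grad theta (x k) (gam0 k) l) /\
    z k = x k - h k *: grad (x k) /\
    x k.+1 = x k - h k *: (grad (x k) - beta *: (grad (x k) - grad (z k))) /\
    gam0 k.+1 = (if ratio grad (x k) (h k) <= mu
                 then proj_int hlo hup (tau * h k)
                 else proj_int hlo hup (h k)).
End Defs.

(* Main.v *)
Require Import Defs.
From HB Require Import structures.
From mathcomp Require Import all_boot all_order all_algebra.
From mathcomp Require Import all_classical all_reals all_analysis.
From mathcomp Require Import ring lra.
Import Order.TTheory GRing.Theory Num.Theory.
Import numFieldNormedType.Exports.
Local Open Scope ring_scope.

Set Implicit Arguments.
Section Aux.
Variables (R : realType) (n : nat).
Notation vec := 'rV[R]_n.
Implicit Types u v w : vec.

Lemma dotvDl u v w : dotv (u + v) w = dotv u w + dotv v w.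
Proof. by rewrite /dotv -big_split; apply: eq_bigr => i _; rewrite mxE mulrDl. Qed.
Lemma dotvZl a u w : dotv (a *: u) w = a * dotv u w.
Proof. by rewrite /dotv mulr_sumr; apply: eq_bigr => i _; rewrite mxE mulrA. Qed.
Lemma dotvNl u w : dotv (- u) w = - dotv u w.
Proof. by rewrite -scaleN1r dotvZl mulN1r. Qed.
Lemma dotvC u w : dotv u w = dotv w u.
Proof. by rewrite /dotv; apply: eq_bigr => i _; rewrite mulrC. Qed.
Lemma dotvDr u v w : dotv w (u + v) = dotv w u + dotv w v.
Proof. by rewrite dotvC dotvDl !(dotvC w). Qed.
Lemma dotvZr a u w : dotv w (a *: u) = a * dotv w u.
Proof. by rewrite dotvC dotvZl dotvC. Qed.
Lemma dotvNr u w : dotv w (- u) = - dotv w u.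
Proof. by rewrite dotvC dotvNl dotvC. Qed.
Lemma dotv0l w : dotv 0 w = 0.
Proof. by rewrite -(scale0r 0) dotvZl mul0r. Qed.
Lemma dotv_ge0 u : 0 <= dotv u u.
Proof. by apply: sumr_ge0 => i _; rewrite -expr2 sqr_ge0. Qed.
Lemma enorm_sq u : enorm u ^+ 2 = dotv u u.
Proof. by rewrite /enorm sqr_sqrtr // dotv_ge0. Qed.
Lemma enorm_ge0 u : 0 <= enorm u.
Proof. exact: sqrtr_ge0. Qed.
Lemma dotv_eq0 u : dotv u u = 0 -> u = 0.
Proof.
move=> H; apply/matrixP => i j; rewrite (ord1 i) mxE.
have := (@psumr_eq0P _ _ xpredT (fun i => u 0 i * u 0 i)
  (fun i _ => ltac:(simpl; rewrite -expr2; exact: sqr_ge0)) H j isT).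
by move/eqP; rewrite mulf_eq0 orbb => /eqP.
Qed.
End Aux.

Theorem proposition2 (R : realType) (n : nat)
  (f : 'rV[R]_n -> R) (grad : 'rV[R]_n -> 'rV[R]_n) (L : R)
  (mu nu hlo hup theta tau beta : R) (x0 : 'rV[R]_n)
  (x z : nat -> 'rV[R]_n) (h gam0 : nat -> R) :
  is_gradient f grad ->
  lipschitz_grad grad L ->
  pseudo_monotone grad ->
  (exists xs, stationary_set grad xs) ->
  0 < mu -> mu < nu -> nu < 1 ->
  0 < hlo -> hlo < 1 -> 1 <= gam0 0%N -> gam0 0%N <= hup ->
  0 < theta -> theta < 1 -> 1 < tau ->
  (1 - Num.sqrt (1 - nu ^+ 2)) / nu ^+ 2 < beta -> beta <= 1 ->
  algorithm2 grad mu nu hlo hup theta tau beta x0 x z h gam0 ->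
  (forall k, grad (x k) != 0) ->
  0 < 2 * beta - 1 - beta ^+ 2 * nu ^+ 2 /\
  forall xs, stationary_set grad xs -> forall k,
    enorm (x k.+1 - xs) ^+ 2 <=
      enorm (x k - xs) ^+ 2
      - (2 * beta - 1 - beta ^+ 2 * nu ^+ 2) * enorm (x k - z k) ^+ 2.
Proof.
move=> _ _ Hpm _ mu0 munu nu1 hlo0 _ g01 _ th0 _ _ Hb b1 [_ Halg] _.
have nu0 : 0 < nu by lra.
have nu20 : 0 < nu ^+ 2 by rewrite exprn_gt0.
set s := Num.sqrt (1 - nu ^+ 2).
have s0 : 0 <= s := sqrtr_ge0 _.
have ss : s ^+ 2 = 1 - nu ^+ 2.
  rewrite sqr_sqrtr // subr_ge0; rewrite -(expr1n _ 2).
  by rewrite lerXn2r ?nnegrE //; lra.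
have Hb' : 1 - s < beta * nu ^+ 2 by rewrite -ltr_pdivrMr.
have nu21 : nu ^+ 2 < 1 by rewrite expr2; nra.
have b0 : 0 < beta.
  have : s ^+ 2 < 1 by rewrite ss; lra.
  move=> H; have : s < 1 by nra.
  move=> H'; have : 0 < beta * nu ^+ 2 by lra.
  by rewrite pmulr_lgt0.
have kap : 0 < 2 * beta - 1 - beta ^+ 2 * nu ^+ 2.
  have F1 : 0 < s - nu ^+ 2 * beta + 1 by nra.
  have F2 : 0 < s + nu ^+ 2 * beta - 1 by lra.
  have := mulr_gt0 F1 F2.
  move=> P; have : 0 < nu ^+ 2 * (2 * beta - 1 - beta ^+ 2 * nu ^+ 2).
    suff -> : nu ^+ 2 * (2 * beta - 1 - beta ^+ 2 * nu ^+ 2) =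
      (s - nu ^+ 2 * beta + 1) * (s + nu ^+ 2 * beta - 1) by [].
    have -> : nu ^+ 2 = 1 - s ^+ 2 by rewrite ss; ring.
    ring.
  by rewrite pmulr_rgt0.
split=> // xs Hxs k.
have gam0_ge0 : forall k, 0 <= gam0 k.
  case=> [|k']; first lra.
  have [_ [_ [_ ->]]] := Halg k'.
  by case: ifP => _; rewrite /proj_int le_max ltW.
have ratio_ge0 : forall xx g, 0 <= g -> 0 <= Defs.ratio grad xx g.
  by move=> xx g g0; rewrite /Defs.ratio divr_ge0 ?mulr_ge0 ?enorm_ge0.
have step_ge0 : forall j, 0 <= ls_step grad theta (x k) (gam0 k) j.
  elim=> [|j IH] /=; first exact: gam0_ge0.
  apply: mulr_ge0; first by apply: mulr_ge0 => //; exact: ltW.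
  have := ratio_ge0 (x k) _ IH; set r := Defs.ratio _ _ _ => r0.
  have : 0 <= 1 / r by rewrite div1r invr_ge0.
  move: r0; set q := 1 / r => _ q0.
  rewrite /Num.min; case: ifP => //.
have [[l [Hl [_ Hhl]]] [Hz [Hx _]]] := Halg k.
have h0 : 0 <= h k by rewrite Hhl.
rewrite -Hhl in Hl.
set g := grad (x k) in Hz Hx Hl *.
set gz := grad (z k) in Hx Hl *.
set X := x k - xs.
have Hgx : grad xs = 0 by [].
have P1 : 0 <= dotv g X.
  apply: Hpm; rewrite Hgx dotv0l //.
have P2 : 0 <= dotv gz (z k - xs).
  apply: Hpm; rewrite Hgx dotv0l //.
have ezx : z k - x k = - (h k *: g) by rewrite Hz; rewrite addrAC subrr add0r.
have ezs : z k - xs = X - h k *: g by rewrite Hz /X addrAC.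
have Q : h k ^+ 2 * dotv (gz - g) (gz - g) <= nu ^+ 2 * dotv (z k - x k) (z k - x k).
  have [E|E] := eqVneq (enorm (z k - x k)) 0.
    have : dotv (z k - x k) (z k - x k) = 0 by rewrite -enorm_sq E expr0n.
    move/dotv_eq0 => /eqP; rewrite subr_eq0 => /eqP Ezx.
    by rewrite /gz Ezx /g subrr dotv0l mulr0 mulr_ge0 // ?dotv_ge0 // ltW.
  have Epos : 0 < enorm (z k - x k) by rewrite lt_neqAle eq_sym E enorm_ge0.
  move: Hl; rewrite /Defs.ratio -/g -/gz -/(zpt grad (x k) (h k)).
  have -> : zpt grad (x k) (h k) = z k by rewrite Hz.
  rewrite -/gz ler_pdivrMr // => H.
  have A0 : 0 <= h k * enorm (gz - g) by rewrite mulr_ge0 // enorm_ge0.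
  have : (h k * enorm (gz - g)) ^+ 2 <= (nu * enorm (z k - x k)) ^+ 2.
    by rewrite lerXn2r // ?nnegrE // mulr_ge0 // ?ltW // enorm_ge0.
  by rewrite !exprMn !enorm_sq.
rewrite !enorm_sq.
have -> : x k - z k = h k *: g by rewrite -opprB ezx opprK.
rewrite ezx in Q.
rewrite Hx.
have -> : x k - h k *: (g - beta *: (g - gz)) - xs = X - h k *: (g - beta *: (g - gz))
  by rewrite /X addrAC.
rewrite ezs in P2.
clearbody X.
rewrite !(dotvDl, dotvDr, dotvNl, dotvNr, dotvZl, dotvZr) in Q P2 *.
rewrite ?(@dotvC _ _ X g) ?(@dotvC _ _ X gz) ?(@dotvC _ _ gz g) in Q P2 *.
set XX := dotv X X in Q P2 *.
set Xg := dotv g X in P1 Q P2 *.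
set Xgz := dotv gz X in Q P2 *.
set gg := dotv g g in Q P2 *.
set ggz := dotv g gz in Q P2 *.
set gzgz := dotv gz gz in Q P2 *.
have H1 : 0 <= h k * (1 - beta) * Xg by rewrite mulr_ge0 // mulr_ge0 // subr_ge0.
have H2 : 0 <= h k * beta * (Xgz - h k * ggz).
  rewrite mulr_ge0 // ?mulr_ge0 // ?ltW //; lra.
have H3 : 0 <= beta ^+ 2 * (nu ^+ 2 * (h k * (h k * gg)) - h k ^+ 2 * (gzgz - ggz - (ggz - gg))).
  rewrite mulr_ge0 ?sqr_ge0 //; lra.
move: H1 H2 H3; set hh := h k; move=> H1 H2 H3.
rewrite expr2 in H3.
lra.
Qed.
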